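(* Let $(\star)$ be a linear system over $\mathbb{F}_q$ in $k$ variables, and suppose that $(\star)$ is equivalent to a linear system $(\star')$ whose coefficient matrix (after reordering the variables) has the block form $A'=\begin{pmatrix}A_1&0\\0&A_2\end{pmatrix}$ with $A_1\in\mathbb{F}_q^{m_1\times k_1}$, $A_2\in\mathbb{F}_q^{m_2\times k_2}$ and $m_1,m_2,k_1,k_2\ne0$. Then $(\star)$ is temperate if and only if the systems with coefficient matrices $A_1$ and $A_2$ are both temperate.
   Context: A linear system with coefficient matrix $A\in\mathbb{F}_q^{m\times k}$ has solutions $(x_1,\dots,x_k)\in(\mathbb{F}_q^n)^k$ with $\sum_j a_{ij}x_j=0$ for all $i$. Two systems are equivalent if each equation of one is a linear combination of the equations of the other. A solution is generic if every $b\in\mathbb{F}_q^k$ with $b_1+\dots+b_k=0$ and $\sum_jb_jx_j=0$ lies in the row space of the coefficient matrix. A system is temperate if there exist constants $\beta,\gamma>0$ with $\gamma<q$ such that for every $n$ every $S\subseteq\mathbb{F}_q^n$ with $|S|\ge\beta\gamma^n$ contains a generic solution in $S^k$. *)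

(* Defs.v *)
From HB Require Import structures.
From mathcomp Require Import all_boot all_order all_algebra all_fingroup.
From mathcomp Require Import Rstruct.
From Stdlib Require Import Reals.
Set Implicit Arguments. Unset Strict Implicit. Unset Printing Implicit Defensive.
Import Order.TTheory GRing.Theory Num.Theory.
Local Open Scope ring_scope.

(* A tuple
   (x_1,...,x_k) in (F^n)^k is encoded as x : 'M[F]_(k,n) whose j-th row is x_j.
   Then sum_j a_ij x_j = 0 for all i  iff  A *m x = 0. *)
Definition is_solution (F : fieldType) (m k n : nat)
  (A : 'M[F]_(m, k)) (x : 'M[F]_(k, n)) : Prop := A *m x = 0.

Definition is_generic (F : fieldType) (m k n : nat)
  (A : 'M[F]_(m, k)) (x : 'M[F]_(k, n)) : Prop :=
  forall b : 'rV[F]_k, \sum_(j < k) b 0 j = 0 -> b *m x = 0 -> (b <= A)%MS.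

Definition temperate (F : finFieldType) (m k : nat) (A : 'M[F]_(m, k)) : Prop :=
  exists beta gamma : R,
    0 < beta /\ 0 < gamma /\ gamma < (#|F|%:R : R) /\
    forall (n : nat) (S : {set 'rV[F]_n}),
      beta * gamma ^+ n <= (#|S|%:R : R) ->
      exists x : 'M[F]_(k, n),
        (forall j : 'I_k, row j x \in S) /\ is_solution A x /\ is_generic A x.

(* Main.v *)
Require Import Defs.
From HB Require Import structures.
From mathcomp Require Import all_boot all_order all_algebra all_fingroup.
From mathcomp Require Import Rstruct zify ring lra.
Set Implicit Arguments. Unset Strict Implicit. Unset Printing Implicit Defensive.
Import Order.TTheory GRing.Theory Num.Theory.
Local Open Scope ring_scope.
Local Notation R := Rdefinitions.R.
Section Comb.
Variable F : finFieldType.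

Lemma card_fiber p r (S : {set 'rV[F]_(p + r)}) :
  #|S| = (\sum_(t : 'rV[F]_p) #|[set u : 'rV[F]_r | row_mx t u \in S]|)%N
  /\ #|S| = (\sum_(v : 'rV[F]_r) #|[set u : 'rV[F]_p | row_mx u v \in S]|)%N.
Proof.
have E : #|S| = (\sum_(pr : 'rV[F]_p * 'rV[F]_r) (if row_mx pr.1 pr.2 \in S then 1 else 0))%N.
  rewrite -sum1_card big_mkcond /=.
  rewrite (reindex (fun pr : 'rV[F]_p * 'rV[F]_r => row_mx pr.1 pr.2)) //=.
  exists (fun x => (lsubmx x, rsubmx x)) => [[a b] _|x _] /=.
    by rewrite row_mxKl row_mxKr.
  by rewrite hsubmxK.
split; rewrite E -(pair_big predT predT (fun a b => if row_mx a b \in S then 1 else 0)%N) /=.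
  apply: eq_bigr => t _; rewrite -sum1_card [RHS]big_mkcond /=.
  by apply: eq_bigr => u _; rewrite inE.
rewrite exchange_big /=.
apply: eq_bigr => t _; rewrite -sum1_card [RHS]big_mkcond /=.
by apply: eq_bigr => u _; rewrite inE.
Qed.

Lemma avg_exists (T : finType) (t0 : T) (f : T -> nat) :
  exists t : T, leq (\sum_(x : T) f x)%N (#|T| * f t)%N.
Proof.
case: (@arg_maxnP T t0 predT f) => // t _ Hm; exists t.
apply: (@leq_trans (\sum_(x : T) f t)%N); first by apply: leq_sum => x _; exact: Hm.
by rewrite sum_nat_const cardE.
Qed.

End Comb.
Section Lift.
Variable F : finFieldType.
Variables (m1 m2 k1 k2 : nat) (A1 : 'M[F]_(m1, k1)) (A2 : 'M[F]_(m2, k2)).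

Definition ones k : 'cV[F]_k := const_mx 1.

Definition Pgood n (S : {set 'rV[F]_n}) :=
  exists (X1 : 'M[F]_(k1, n)) (X2 : 'M[F]_(k2, n)),
   [/\ (forall j, row j X1 \in S), (forall j, row j X2 \in S), A1 *m X1 = 0, A2 *m X2 = 0 &
     forall (b1 : 'rV_k1) (b2 : 'rV_k2), b1 *m ones k1 + b2 *m ones k2 = 0 ->
       b1 *m X1 + b2 *m X2 = 0 -> (b1 <= A1)%MS /\ (b2 <= A2)%MS].

Lemma row_ones k p j (t : 'rV[F]_p) : row j (ones k *m t) = t.
Proof.
rewrite row_mul /ones row_const.
have -> : (const_mx 1 : 'M[F]_(1,1)) = 1 by apply/matrixP => a b; rewrite !mxE !ord1.
by rewrite mul1mx.
Qed.

Lemma sum_ones k (b : 'rV[F]_k) : (b *m ones k = (\sum_j b 0 j)%:M).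
Proof.
apply/matrixP => a c; rewrite !mxE !ord1 eqxx mulr1n.
by apply: eq_bigr => j _; rewrite mxE mulr1.
Qed.

Lemma sum_ones0 k (b : 'rV[F]_k) : \sum_j b 0 j = 0 <-> b *m ones k = 0.
Proof.
rewrite sum_ones; split => [->|H]; first by rewrite raddf0.
by have := congr1 (fun M : 'M[F]_1 => M 0 0) H; rewrite !mxE eqxx mulr1n.
Qed.


Hypothesis Z1 : A1 *m ones k1 = 0.
Hypothesis Z2 : A2 *m ones k2 = 0.

Lemma lift_slab n (S : {set 'rV[F]_(1 + n)}) (t : 'rV[F]_1) :
  Pgood [set u : 'rV[F]_n | row_mx t u \in S] -> Pgood S.
Proof.
case=> X1 [X2 [R1 R2 E1 E2 G]].
exists (row_mx (ones k1 *m t) X1), (row_mx (ones k2 *m t) X2); split.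
- by move=> j; rewrite row_row_mx row_ones; have := R1 j; rewrite inE.
- by move=> j; rewrite row_row_mx row_ones; have := R2 j; rewrite inE.
- by rewrite mul_mx_row mulmxA Z1 mul0mx E1 row_mx0.
- by rewrite mul_mx_row mulmxA Z2 mul0mx E2 row_mx0.
move=> b1 b2 Hs; rewrite !mul_mx_row add_row_mx !mulmxA -mulmxDl Hs mul0mx.
move=> H; apply: G => //.
by have /eqP := H; rewrite row_mx_eq0 => /andP [_ /eqP].
Qed.


Lemma lift_two a b (S : {set 'rV[F]_(1 + (a + b))}) (t1 t2 : 'rV[F]_1)
  (v1 : 'rV[F]_b) (u2 : 'rV[F]_a) (X1 : 'M[F]_(k1, a)) (X2 : 'M[F]_(k2, b)) :
  t1 != t2 ->
  (forall j, row_mx t1 (row_mx (row j X1) v1) \in S) ->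
  (forall j, row_mx t2 (row_mx u2 (row j X2)) \in S) ->
  A1 *m X1 = 0 -> A2 *m X2 = 0 -> is_generic A1 X1 -> is_generic A2 X2 ->
  Pgood S.
Proof.
move=> Ht R1 R2 E1 E2 G1 G2.
exists (row_mx (ones k1 *m t1) (row_mx X1 (ones k1 *m v1))),
       (row_mx (ones k2 *m t2) (row_mx (ones k2 *m u2) X2)); split.
- by move=> j; rewrite !row_row_mx !row_ones.
- by move=> j; rewrite !row_row_mx !row_ones.
- by rewrite !mul_mx_row !mulmxA Z1 !mul0mx E1 !row_mx0.
- by rewrite !mul_mx_row !mulmxA Z2 !mul0mx E2 !row_mx0.
move=> b1 b2 Hs; rewrite !mul_mx_row !add_row_mx !mulmxA.
have Hs2 : b2 *m ones k2 = - (b1 *m ones k1) by apply/eqP; rewrite -addr_eq0 addrC Hs.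
rewrite Hs2 !mulNmx.
move=> /eqP; rewrite !row_mx_eq0 => /andP [H1 /andP [H2 H3]].
have Hz : b1 *m ones k1 = 0.
  move: H1; rewrite -mulmxBr; set s1 := b1 *m ones k1.
  rewrite [s1]mx11_scalar mul_scalar_mx scaler_eq0.
  case/orP => [/eqP -> | ]; first by rewrite raddf0.
  by rewrite subr_eq0 (negbTE Ht).
move: H2 H3; rewrite Hz !mul0mx oppr0 addr0 add0r => /eqP H2 /eqP H3.
split; [apply: G1 | apply: G2] => //; apply/sum_ones0 => //.
by rewrite Hs2 Hz oppr0.
Qed.

End Lift.
Section Main.
Variable F : finFieldType.
Variables (m1 m2 k1 k2 : nat) (A1 : 'M[F]_(m1, k1)) (A2 : 'M[F]_(m2, k2)).
Hypothesis Z1 : A1 *m ones F k1 = 0.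
Hypothesis Z2 : A2 *m ones F k2 = 0.
Variables (be1 ga1 be2 ga2 : R).
Hypothesis T1 : forall (n : nat) (S : {set 'rV[F]_n}),
      be1 * ga1 ^+ n <= (#|S|%:R : R) ->
      exists x : 'M[F]_(k1, n),
        (forall j : 'I_k1, row j x \in S) /\ is_solution A1 x /\ is_generic A1 x.
Hypothesis T2 : forall (n : nat) (S : {set 'rV[F]_n}),
      be2 * ga2 ^+ n <= (#|S|%:R : R) ->
      exists x : 'M[F]_(k2, n),
        (forall j : 'I_k2, row j x \in S) /\ is_solution A2 x /\ is_generic A2 x.
Let Q : R := #|F|%:R.

Lemma Qpos : 0 < Q.
Proof. by rewrite /Q ltr0n; apply/card_gt0P; exists 0. Qed.

Lemma case1 n a b (e : (a + b)%N = n) (S : {set 'rV[F]_(1 + n)}) (t1 t2 : 'rV[F]_1) (c : R) :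
  t1 != t2 -> be1 * ga1 ^+ a * Q ^+ b <= c -> be2 * ga2 ^+ b * Q ^+ a <= c ->
  c <= (#|[set u : 'rV[F]_n | row_mx t1 u \in S]|%:R : R) ->
  c <= (#|[set u : 'rV[F]_n | row_mx t2 u \in S]|%:R : R) ->
  Pgood A1 A2 S.
Proof.
subst n => Ht Hc1 Hc2 Hs1 Hs2.
set S1 := [set u : 'rV[F]_(a + b) | row_mx t1 u \in S] in Hs1.
set S2 := [set u : 'rV[F]_(a + b) | row_mx t2 u \in S] in Hs2.
have [v1 Hv1] := avg_exists 0 (fun v : 'rV[F]_b => #|[set u : 'rV[F]_a | row_mx u v \in S1]|).
have [u2 Hu2] := avg_exists 0 (fun u : 'rV[F]_a => #|[set v : 'rV[F]_b | row_mx u v \in S2]|).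
rewrite -(card_fiber S1).2 card_mx mul1n in Hv1.
rewrite -(card_fiber S2).1 card_mx mul1n in Hu2.
have [X1 [R1 [E1 G1]]] : exists x : 'M[F]_(k1, a),
        (forall j : 'I_k1, row j x \in [set u : 'rV[F]_a | row_mx u v1 \in S1])
        /\ is_solution A1 x /\ is_generic A1 x.
  apply: T1.
  have : be1 * ga1 ^+ a * Q ^+ b <= Q ^+ b * #|[set u : 'rV[F]_a | row_mx u v1 \in S1]|%:R.
    apply: (le_trans Hc1); apply: (le_trans Hs1).
    by rewrite /Q -natrX -natrM ler_nat.
  by rewrite mulrC ler_pM2l // exprn_gt0 // Qpos.
have [X2 [R2 [E2 G2]]] : exists x : 'M[F]_(k2, b),
        (forall j : 'I_k2, row j x \in [set v : 'rV[F]_b | row_mx u2 v \in S2])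
        /\ is_solution A2 x /\ is_generic A2 x.
  apply: T2.
  have : be2 * ga2 ^+ b * Q ^+ a <= Q ^+ a * #|[set v : 'rV[F]_b | row_mx u2 v \in S2]|%:R.
    apply: (le_trans Hc2); apply: (le_trans Hs2).
    by rewrite /Q -natrX -natrM ler_nat.
  by rewrite mulrC ler_pM2l // exprn_gt0 // Qpos.
apply: (lift_two Z1 Z2 (v1 := v1) (u2 := u2) Ht _ _ E1 E2 G1 G2).
- by move=> j; have := R1 j; rewrite !inE.
- by move=> j; have := R2 j; rewrite !inE.
Qed.

End Main.
Section Main2.
Variable F : finFieldType.
Variables (m1 m2 k1 k2 : nat) (A1 : 'M[F]_(m1, k1)) (A2 : 'M[F]_(m2, k2)).
Hypothesis Z1 : A1 *m ones F k1 = 0.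
Hypothesis Z2 : A2 *m ones F k2 = 0.
Variables (be1 ga1 be2 ga2 : R).
Hypothesis T1 : forall (n : nat) (S : {set 'rV[F]_n}),
      be1 * ga1 ^+ n <= (#|S|%:R : R) ->
      exists x : 'M[F]_(k1, n),
        (forall j : 'I_k1, row j x \in S) /\ is_solution A1 x /\ is_generic A1 x.
Hypothesis T2 : forall (n : nat) (S : {set 'rV[F]_n}),
      be2 * ga2 ^+ n <= (#|S|%:R : R) ->
      exists x : 'M[F]_(k2, n),
        (forall j : 'I_k2, row j x \in S) /\ is_solution A2 x /\ is_generic A2 x.
Variables (beta gam eps : R).
Hypothesis Hb : 1 < beta.
Hypothesis Hg : 0 <= gam.
Hypothesis He : 0 <= eps.
Hypothesis Hc0 : 0 <= 1 - (#|F|%:R : R) * eps.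
Hypothesis Hc : 1 <= (1 - (#|F|%:R : R) * eps) * gam.
Hypothesis H5 : forall a b : nat, leq a b -> leq b a.+1 ->
  be1 * ga1 ^+ a * (#|F|%:R : R) ^+ b <= eps * (beta * gam ^+ (1 + (a + b))) /\
  be2 * ga2 ^+ b * (#|F|%:R : R) ^+ a <= eps * (beta * gam ^+ (1 + (a + b))).

Lemma main_ind n (S : {set 'rV[F]_n}) : beta * gam ^+ n <= (#|S|%:R : R) -> Pgood A1 A2 S.
Proof.
elim: n S => [|n IH] S HS.
  have : leq #|S| 1 by rewrite (leq_trans (max_card _)) // card_mx.
  rewrite -(ler_nat R) => H1; have := le_trans HS H1; rewrite expr0 mulr1 => H2.
  by have := lt_le_trans Hb H2; rewrite ltxx.
pose S' : {set 'rV[F]_(1 + n)} := S.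
pose sl t := [set u : 'rV[F]_n | row_mx t u \in S'].
have Hsum : #|S| = (\sum_(t : 'rV[F]_1) #|sl t|)%N := (card_fiber S').1.
case: (@arg_maxnP _ (0 : 'rV[F]_1) predT (fun t => #|sl t|) isT) => t0 _ Hm.
have Hbeta0 : 0 <= beta by apply: ltW; apply: lt_trans Hb.
case: (boolP [exists t, (t != t0) && (eps * #|S|%:R <= (#|sl t|%:R : R))]).
  case/existsP => t /andP [Hne Ht].
  have Hod := odd_double_half n; rewrite -addnn in Hod.
  have Hn : (n./2 + (n - n./2))%N = n by lia.
  have Hl1 : leq n./2 (n - n./2) by lia.
  have Hl2 : leq (n - n./2) (n./2).+1 by lia.
  have [Ha Hb'] := H5 Hl1 Hl2.
  rewrite Hn in Ha Hb'.
  have Hct : eps * (beta * gam ^+ (1 + n)) <= (#|sl t|%:R : R).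
    by apply: le_trans Ht; apply: (ler_wpM2l He).
  apply: (case1 Z1 Z2 T1 T2 Hn (S := S') (t1 := t0) (t2 := t)
            (c := eps * (beta * gam ^+ (1 + n)))) => //.
  - by rewrite eq_sym.
  - apply: (le_trans Hct); rewrite ler_nat; exact: Hm.
rewrite negb_exists => /forallP Hall.
have Hsl : (#|S|%:R : R) <= #|sl t0|%:R + eps * #|S|%:R * #|F|%:R.
  rewrite {1}Hsum natr_sum (bigD1 t0) //= lerD2l big_mkcond /=.
  apply: (le_trans (y := \sum_(t : 'rV[F]_1) eps * #|S|%:R)).
    apply: ler_sum => t _; case: ifP => Hne.
      by have := Hall t; rewrite Hne /= -ltNge => /ltW.
    by apply: mulr_ge0 => //; rewrite ler0n.
  by rewrite sumr_const card_mx mul1n expn1 !mulr_natr.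
have Hx : beta * gam ^+ n <= (#|sl t0|%:R : R).
  apply: (le_trans (y := (1 - #|F|%:R * eps) * #|S|%:R)); last by lra.
  apply: (le_trans (y := (1 - #|F|%:R * eps) * (beta * gam ^+ n.+1))); last first.
    by apply: ler_wpM2l.
  have -> : (1 - #|F|%:R * eps) * (beta * gam ^+ n.+1) =
            (beta * gam ^+ n) * ((1 - #|F|%:R * eps) * gam) by rewrite exprS; ring.
  apply: ler_peMr => //.
  by apply: mulr_ge0 => //; apply: exprn_ge0.
apply: (lift_slab Z1 Z2 (t := t0)); exact: IH.
Qed.
End Main2.
Lemma bernoulli (h : R) n : 0 <= h -> 1 + n%:R * h <= (1 + h) ^+ n.
Proof.
move=> h0; elim: n => [|n IH]; first by rewrite mul0r addr0 expr0.
rewrite exprS -natr1.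
have H1 : 0 <= 1 + h by lra.
apply: (le_trans (y := (1 + h) * (1 + n%:R * h))); last by apply: ler_wpM2l.
have : 0 <= n%:R * h * h by apply: mulr_ge0 => //; apply: mulr_ge0 => //; rewrite ler0n.
move=> H; lra.
Qed.

Lemma exists_n (be ga Q : R) : 0 < ga -> ga < Q -> exists n : nat, be * ga ^+ (1 + n) <= Q ^+ n.
Proof.
move=> g0 gQ.
set h := Q / ga - 1.
have h0 : 0 < h by rewrite /h subr_gt0 ltr_pdivlMr // mul1r.
have Q0 : 0 < Q by apply: lt_trans gQ.
set c := `|be * ga| / h.
have c0 : 0 <= c by apply: divr_ge0 => //; apply: ltW.
exists (Num.Def.archi_bound c).
set n := Num.Def.archi_bound c.
have Hn : c < n%:R := archi_boundP c0.
have Hb := bernoulli n (ltW h0).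
have E : 1 + h = Q / ga by rewrite /h; ring.
rewrite E expr_div_n in Hb.
have Hgn : 0 < ga ^+ n by apply: exprn_gt0.
have : be * ga <= n%:R * h.
  apply: (le_trans (ler_norm _)).
  by rewrite -ler_pdivrMr // ltW.
move=> H.
have : be * ga <= Q ^+ n / ga ^+ n.
  apply: (le_trans H); apply: le_trans Hb; rewrite lerDr //.
rewrite ler_pdivlMr // => H2.
by rewrite exprS mulrA.
Qed.
Lemma temp_rowsum (F : finFieldType) m k (A : 'M[F]_(m, k)) :
  temperate A -> A *m ones F k = 0.
Proof.
case=> be [ga [Hbe [Hga [Hq HT]]]].
apply/matrixP => i j; rewrite [j]ord1 [RHS]mxE.
apply/eqP/negPn/negP => Hne.
have [n Hn] := exists_n be Hga Hq.
pose c : 'rV[F]_1 := const_mx 1.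
pose S : {set 'rV[F]_(1 + n)} := [set row_mx c u | u : 'rV[F]_n].
have HS : #|S| = (#|F| ^ n)%nat.
  rewrite card_imset; first by rewrite card_mx mul1n.
  by move=> u v /eq_row_mx [].
have [x [Rx [Ex _]]] : exists x : 'M[F]_(k, 1 + n),
    (forall j : 'I_k, row j x \in S) /\ is_solution A x /\ is_generic A x.
  by apply: HT; rewrite HS natrX.
have Hx1 : forall l, x l (lshift n 0) = 1.
  move=> l; have /imsetP [u _ Hu] := Rx l.
  have := congr1 (fun M : 'rV[F]_(1 + n) => M 0 (lshift n 0)) Hu.
  by rewrite /= row_mxEl !mxE.
have := congr1 (fun M : 'M[F]_(m, 1 + n) => M i (lshift n 0)) Ex.
rewrite /= !mxE => H; move/negP: Hne; apply; apply/eqP; rewrite -H.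
by rewrite mxE; apply: eq_bigr => l _; rewrite Hx1 !mxE.
Qed.
Lemma params (Q be1 ga1 be2 ga2 : R) : 2 <= Q -> 0 < be1 -> 0 < be2 ->
  0 < ga1 -> 0 < ga2 -> ga1 < Q -> ga2 < Q ->
  exists beta gam eps : R,
  0 < gam /\ gam < Q /\ 1 < beta /\ 0 <= eps /\
      0 <= 1 - Q * eps /\ 1 <= (1 - Q * eps) * gam /\
      (forall a b : nat, leq a b -> leq b a.+1 ->
       be1 * ga1 ^+ a * Q ^+ b <= eps * (beta * gam ^+ (1 + (a + b))) /\
       be2 * ga2 ^+ b * Q ^+ a <= eps * (beta * gam ^+ (1 + (a + b)))).
Proof.
move=> HQ Hb1 Hb2 Hg1 Hg2 Hg1Q Hg2Q.
have [g [G1 G2 G3 G4]] : exists g : R, [/\ ga1 <= g, ga2 <= g, 1 <= g & g < Q].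
  exists (Num.max (Num.max ga1 ga2) 1).
  rewrite !le_max !lexx /= !orbT /=; split => //.
  by rewrite !gt_max Hg1Q Hg2Q /=; lra.
pose gam := (g + Q) / 2.
have Hgam1 : 1 < gam by rewrite /gam; lra.
have HgamQ : gam < Q by rewrite /gam; lra.
have Hgam0 : 0 < gam by lra.
have HgQ : g * Q <= gam ^+ 2.
  have := sqr_ge0 (g - Q); rewrite /gam !expr2 => H; nra.
have Q0 : 0 < Q by lra.
pose eps := (1 - gam^-1) / Q.
have Hinv : gam^-1 < 1 by rewrite invf_lt1.
have Hinv0 : 0 < gam^-1 by rewrite invr_gt0.
have HQe : Q * eps = 1 - gam^-1 by rewrite /eps mulrC -mulrA mulVf ?mulr1 // gt_eqF.
have He0 : 0 < eps by rewrite /eps divr_gt0 // subr_gt0.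
pose B := be1 + be2.
pose beta := B * Q / (eps * gam) + 2.
have Heg0 : 0 < eps * gam by apply: mulr_gt0.
have HB0 : 0 < B by rewrite /B addr_gt0.
have Hbeta : B * Q <= eps * gam * beta.
  have -> : eps * gam * beta = B * Q * ((eps * gam) / (eps * gam)) + 2 * (eps * gam).
    by rewrite /beta; ring.
  rewrite mulfV ?gt_eqF // mulr1 lerDl.
  by apply: mulr_ge0; [lra | apply: ltW].
have Hbeta1 : 1 < beta.
  rewrite /beta; have : 0 <= B * Q / (eps * gam).
    by apply: divr_ge0; [apply: mulr_ge0; apply: ltW | apply: ltW].
  lra.
have Hc0 : 0 <= 1 - Q * eps by rewrite HQe; lra.
have Hc : 1 <= (1 - Q * eps) * gam by rewrite HQe opprB addrC subrK mulVf // gt_eqF.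
exists beta, gam, eps; split => //; split => //; split => //; split; first exact: ltW.
split => //; split => //.
move=> a b Hab Hba.
have Hk : B * Q * (g * Q) ^+ a <= eps * (beta * gam ^+ (1 + (a + b))).
  have E1 : (g * Q) ^+ a <= gam ^+ (a + b).
    apply: (le_trans (y := (gam ^+ 2) ^+ a)).
      apply: lerXn2r => //; rewrite ?nnegrE //; apply: mulr_ge0; lra.
    rewrite -exprM; apply: (ler_weXn2l (ltW Hgam1)).
    by rewrite mul2n -addnn leq_add2l.
  have -> : eps * (beta * gam ^+ (1 + (a + b))) = (eps * gam * beta) * gam ^+ (a + b).
    by rewrite exprS; ring.
  apply: ler_pM => //.
  - by apply: mulr_ge0; apply: ltW.
  - by apply: exprn_ge0; apply: mulr_ge0; lra.
have Hga1 : ga1 ^+ a <= g ^+ a by apply: lerXn2r; rewrite ?nnegrE; lra.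
have Hga2 : ga2 ^+ b <= g ^+ b by apply: lerXn2r; rewrite ?nnegrE; lra.
have HQ1 : 1 <= Q by lra.
have HQb : Q ^+ b <= Q ^+ a.+1 by apply: ler_weXn2l.
have Hgb : g ^+ b <= g ^+ a.+1 by apply: ler_weXn2l.
have Hp1 : 0 <= ga1 ^+ a by apply: exprn_ge0; lra.
have Hp2 : 0 <= ga2 ^+ b by apply: exprn_ge0; lra.
have Hq1 : 0 <= Q ^+ b by apply: exprn_ge0; lra.
have Hq2 : 0 <= Q ^+ a by apply: exprn_ge0; lra.
have Hg0 : 0 <= g ^+ a by apply: exprn_ge0; lra.
have HBa : be1 <= B by rewrite /B; lra.
have HBb : be2 <= B by rewrite /B; lra.
have P1 : be1 * ga1 ^+ a * Q ^+ b <= B * g ^+ a * Q ^+ a.+1.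
  apply: ler_pM => //; first by apply: mulr_ge0; lra.
  by apply: ler_pM => //; lra.
have P2 : be2 * ga2 ^+ b * Q ^+ a <= B * g ^+ a.+1 * Q ^+ a.
  apply: ler_pM => //; first by apply: mulr_ge0; lra.
  by apply: ler_pM => //; lra.
have E1 : B * g ^+ a * Q ^+ a.+1 = B * Q * (g * Q) ^+ a by rewrite exprS exprMn; ring.
have E2 : B * g ^+ a.+1 * Q ^+ a <= B * Q * (g * Q) ^+ a.
  have -> : B * Q * (g * Q) ^+ a = B * g ^+ a * Q ^+ a * Q by rewrite exprMn; ring.
  have -> : B * g ^+ a.+1 * Q ^+ a = B * g ^+ a * Q ^+ a * g by rewrite exprS; ring.
  apply: ler_wpM2l; last by lra.
  by apply: mulr_ge0 => //; apply: mulr_ge0; lra.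
split; apply: le_trans Hk.
  by rewrite -E1.
exact: le_trans E2.
Qed.
Lemma row_permP (F : finFieldType) k n (s : 'S_k) (x : 'M[F]_(k, n)) j :
  row j (perm_mx s *m x) = row (s j) x.
Proof. by rewrite -row_permE; apply/rowP => l; rewrite !mxE. Qed.

Lemma perm_ones (F : finFieldType) k (s : 'S_k) : perm_mx s *m ones F k = ones F k.
Proof. by rewrite -row_permE; apply/matrixP => i j; rewrite !mxE. Qed.

Lemma sol_le (F : finFieldType) m m' k n (A : 'M[F]_(m, k)) (C : 'M[F]_(m', k)) (x : 'M[F]_(k, n)) :
  (A <= C)%MS -> C *m x = 0 -> A *m x = 0.
Proof. by move=> /submxP [D ->] H; rewrite -mulmxA H mulmx0. Qed.

Lemma card_F2 (F : finFieldType) : (2%:R : R) <= #|F|%:R.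
Proof.
rewrite ler_nat; apply/card_gt1P; exists 0, 1; split => //.
by rewrite eq_sym oner_neq0.
Qed.
Theorem proposition5p4 (F : finFieldType) (m m1 m2 k1 k2 : nat)
  (A : 'M[F]_(m, k1 + k2)) (A1 : 'M[F]_(m1, k1)) (A2 : 'M[F]_(m2, k2))
  (s : 'S_(k1 + k2)) :
  (0 < m1)%N -> (0 < m2)%N -> (0 < k1)%N -> (0 < k2)%N ->
  (A == col_perm s (block_mx A1 0 0 A2))%MS ->
  temperate A <-> (temperate A1 /\ temperate A2).
Proof.
move=> _ _ _ _ /andP [HAC HCA].
set B := block_mx A1 0 0 A2 in HAC HCA.
have CE : col_perm s B = B *m perm_mx s^-1 by rewrite col_permE.
rewrite CE in HAC HCA.
have PP : perm_mx s^-1 *m perm_mx s = 1 :> 'M[F]_(k1 + k2) by rewrite -perm_mxM mulVg perm_mx1.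
have PP' : perm_mx s *m perm_mx s^-1 = 1 :> 'M[F]_(k1 + k2) by rewrite -perm_mxM mulgV perm_mx1.
have onesE : ones F (k1 + k2) = col_mx (ones F k1) (ones F k2) by rewrite /ones col_mx_const.
split.
- case=> be [ga [Hbe [Hga [HgQ HT]]]].
  have key : forall n (S : {set 'rV[F]_n}), be * ga ^+ n <= (#|S|%:R : R) ->
    exists (U : 'M[F]_(k1, n)) (D : 'M[F]_(k2, n)),
      ((forall j, row j U \in S) /\ is_solution A1 U /\ is_generic A1 U) /\
          ((forall j, row j D \in S) /\ is_solution A2 D /\ is_generic A2 D).
    move=> n S HS; have [x [Rx [Ex Gx]]] := HT n S HS.
    set Y := perm_mx s^-1 *m x.
    have RY : forall j, row j Y \in S by move=> j; rewrite row_permP.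
    have EY : B *m Y = 0.
      by rewrite /Y mulmxA; apply: (sol_le HCA).
    rewrite -[Y]vsubmxK /B mul_block_col !mul0mx addr0 add0r in EY.
    move/eqP: EY; rewrite col_mx_eq0 => /andP [/eqP E1 /eqP E2].
    have genB : forall b : 'rV[F]_(k1 + k2), b *m ones F _ = 0 -> b *m Y = 0 -> (b <= B)%MS.
      move=> b Hs Hb.
      have Hb' : ((b *m perm_mx s^-1) *m x = 0) by rewrite -mulmxA.
      have Hs' : \sum_j (b *m perm_mx s^-1) 0 j = 0.
        by apply/sum_ones0; rewrite -mulmxA perm_ones.
      have := Gx _ Hs' Hb' => /(submx_trans)/(_ HAC) H.
      have := submxMr (perm_mx s) H; by rewrite -!mulmxA PP !mulmx1.
    exists (usubmx Y), (dsubmx Y); split; (split; [|split]) => //.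
    + by move=> j; have := RY (lshift k2 j); rewrite -{1}[Y]vsubmxK rowKu.
    + move=> b1 Hs Hb.
      have : (row_mx b1 0 <= B)%MS.
        apply: genB.
          by rewrite onesE mul_row_col mul0mx addr0; apply/sum_ones0.
        by rewrite -[Y]vsubmxK mul_row_col mul0mx addr0.
      case/submxP => D HD.
      rewrite -[D]hsubmxK /B mul_row_block !mulmx0 addr0 add0r in HD.
      case: (eq_row_mx HD) => -> _.
      by apply/submxP; exists (lsubmx D).
    + by move=> j; have := RY (rshift k1 j); rewrite -{1}[Y]vsubmxK rowKd.
    + move=> b2 Hs Hb.
      have : (row_mx 0 b2 <= B)%MS.
        apply: genB.
          by rewrite onesE mul_row_col mul0mx add0r; apply/sum_ones0.
        by rewrite -[Y]vsubmxK mul_row_col mul0mx add0r.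
      case/submxP => D HD.
      rewrite -[D]hsubmxK /B mul_row_block !mulmx0 addr0 add0r in HD.
      case: (eq_row_mx HD) => _ ->.
      by apply/submxP; exists (rsubmx D).
  split; exists be, ga; split => //; split => //; split => // n S HS;
    have [U [D [H1 H2]]] := key n S HS.
    by exists U.
  by exists D.
case=> TA1 TA2.
have Z1 := temp_rowsum TA1; have Z2 := temp_rowsum TA2.
case: TA1 => be1 [ga1 [Hb1 [Hg1 [Hg1Q T1]]]].
case: TA2 => be2 [ga2 [Hb2 [Hg2 [Hg2Q T2]]]].
have [beta [gam [eps [Hgam0 [HgamQ [Hbeta [He [Hc0 [Hc H5]]]]]]]]] :=
  params (card_F2 F) Hb1 Hb2 Hg1 Hg2 Hg1Q Hg2Q.
have PG := main_ind Z1 Z2 T1 T2 Hbeta (ltW Hgam0) He Hc0 Hc H5.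
exists beta, gam; split; first by apply: lt_trans Hbeta.
split => //; split => // n S HS.
have [X1 [X2 [R1 R2 E1 E2 G]]] := PG n S HS.
exists (perm_mx s *m col_mx X1 X2); split; [|split].
- move=> i; rewrite row_permP; case: (split_ordP (s i)) => l ->.
    by rewrite rowKu.
  by rewrite rowKd.
- apply: (sol_le HAC).
  rewrite -mulmxA (mulmxA (perm_mx s^-1)) PP mul1mx /B mul_block_col !mul0mx addr0 add0r.
  by rewrite E1 E2 col_mx0.
- move=> b Hs Hb.
  set b' := b *m perm_mx s.
  have Hb' : row_mx (lsubmx b') (rsubmx b') *m col_mx X1 X2 = 0.
    by rewrite hsubmxK /b' -mulmxA.
  rewrite mul_row_col in Hb'.
  have Hs' : lsubmx b' *m ones F k1 + rsubmx b' *m ones F k2 = 0.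
    by rewrite -mul_row_col -onesE hsubmxK /b' -mulmxA perm_ones; apply/sum_ones0.
  have [H1 H2] := G _ _ Hs' Hb'.
  have HbB : (b' <= B)%MS.
    case/submxP: H1 => D1 HD1; case/submxP: H2 => D2 HD2.
    apply/submxP; exists (row_mx D1 D2).
    by rewrite /B mul_row_block !mulmx0 addr0 add0r -HD1 -HD2 hsubmxK.
  apply: submx_trans HCA.
  have -> : b = b' *m perm_mx s^-1 by rewrite /b' -mulmxA PP' mulmx1.
  exact: submxMr.
Qed.
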